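(* For any planar weighted graph $(G,x)$ as in the context, $$\mathcal Z_{\mathrm{Ising}}(G,x)=\sum_{D\in\mathcal D(G^K)}(-1)^{t(D)}\,x^K(D).$$
   Context: Let $G$ be a finite connected graph embedded in the plane, with edge weights $x=(x_e)$. Let $\vec E(G)$ be the set of oriented edges, with origin $o(e)$ and reversal $\bar e$. $\mathcal E(G)$ is the set of even subgraphs (edge sets in which every vertex has even degree), $x(P)=\prod_{e\in P}x_e$, and $\mathcal Z_{\mathrm{Ising}}(G,x)=\sum_{P\in\mathcal E(G)}x(P)$. Terminal graph $G^K$. Its vertex set is $\vec E(G)$. It has two kinds of edges: - a long edge $\{e,\bar e\}$ of weight $1$ for each edge of $G$; - a short edge $\{e,e'\}$ of weight $(x_ex_{e'})^{1/2}$ for each pair $e\ne e'$ with $o(e)=o(e')$. So each vertex $v$ of $G$ of degree $d(v)$ is replaced by a complete graph $K_{d(v)}$. $\mathcal D(G^K)$ is the set of perfect matchings (dimer configurations) of $G^K$, and $x^K(D)$ is the product of the weights of the edges of $D$. For $D\in\mathcal D(G^K)$, $t(D)$ is the number of unordered pairs of short edges $\{e_1,e_2\},\{e_3,e_4\}$ of $D$ at the same vertex $v$ of $G$ whose endpoints interlace in the cyclic order of the edges of $G$ around $v$. This is the number of crossings when the cliques are drawn as chords of a small circle around $v$. *)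

(* Defs.v *)
From HB Require Import structures.
From mathcomp Require Import all_boot all_order all_fingroup all_algebra.
Set Implicit Arguments. Unset Strict Implicit. Unset Printing Implicit Defensive.
Import Order.TTheory GRing.Theory Num.Theory.
Local Open Scope ring_scope.

(* A planar embedded graph G is given combinatorially as a rotation system:
   - E : finType is the set of (undirected) edges of G;
   - the oriented edges (darts) are  E * bool, the reversal of (e,b) is (e,~~b);
   - sigma : {perm E * bool} gives, for each dart, the next dart (in the
     cyclic order around the common origin vertex); the vertices of G are the
     sigma-cycles, and the origin o(d) is the sigma-cycle of d. *)

Definition dart (E : finType) := (E * bool)%type.
Definition drev (E : finType) (d : dart E) : dart E := (d.1, ~~ d.2).

Definition same_vertex (E : finType) (sigma : {perm dart E}) (a b : dart E) :=
  fconnect sigma a b.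

Definition rs_connected (E : finType) (sigma : {perm dart E}) :=
  forall a b : dart E,
    connect (fun u v : dart E => (v == sigma u) || (v == drev u)) a b.

Definition face_perm (E : finType) (sigma : {perm dart E}) (d : dart E) :=
  sigma (drev d).

(* genus-0 (planar) embedding: Euler's formula V - E + F = 2 *)
Definition rs_planar (E : finType) (sigma : {perm dart E}) :=
  (fcard sigma (@predT (dart E)) + fcard (face_perm sigma) (@predT (dart E)) = #|E| + 2)%N.

(* P is an even subgraph: every vertex has even degree in P (a loop counts 2) *)
Definition even_subgraph (E : finType) (sigma : {perm dart E}) (P : {set E}) :=
  [forall d : dart E, ~~ odd #|[set d' : dart E | same_vertex sigma d d' & d'.1 \in P]|].

Definition Z_Ising (R : rcfType) (E : finType) (sigma : {perm dart E})
    (x : E -> R) : R :=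
  \sum_(P : {set E} | even_subgraph sigma P) \prod_(e in P) x e.

(* Edges of G^K: inl e is the long edge {e, rev e}; inr S (with S a 2-set of
   darts at a common vertex) is the short edge S. *)
Definition kedge (E : finType) := (E + {set dart E})%type.

Definition kedge_valid (E : finType) (sigma : {perm dart E}) (k : kedge E) : bool :=
  match k with
  | inl _ => true
  | inr S0 => (#|S0| == 2)%N && [forall a in S0, forall b in S0, same_vertex sigma a b]
  end.

Definition kends (E : finType) (k : kedge E) : {set dart E} :=
  match k with
  | inl e => [set (e, true); (e, false)]
  | inr S0 => S0
  end.

Definition kweight (R : rcfType) (E : finType) (x : E -> R) (k : kedge E) : R :=
  match k with
  | inl _ => 1
  | inr S0 => Num.sqrt (\prod_(d in S0) x d.1)
  end.

Definition dimer (E : finType) (sigma : {perm dart E}) (D : {set kedge E}) :=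
  [forall k in D, kedge_valid sigma k] &&
  [forall d : dart E, #|[set k in D | d \in kends k]| == 1%N].

(* the chords {a,b} and {c,d} (four distinct darts at the same vertex)
   interlace in the cyclic order sigma around that vertex *)
Definition interlace (E : finType) (sigma : {perm dart E}) (a b c d : dart E) :=
  [&& same_vertex sigma a b, same_vertex sigma a c, same_vertex sigma a d,
      uniq [:: a; b; c; d] &
      (findex sigma a c < findex sigma a b)%N != (findex sigma a d < findex sigma a b)%N].

Definition kcross (E : finType) (sigma : {perm dart E}) (k1 k2 : kedge E) :=
  match k1, k2 with
  | inr S1, inr S2 =>
      [exists a, exists b, exists c, exists d,
        [&& S1 == [set a; b], S2 == [set c; d] & interlace sigma a b c d]]
  | _, _ => false
  end.

Definition tcross (E : finType) (sigma : {perm dart E}) (D : {set kedge E}) : nat :=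
  #|[set Q : {set kedge E} | (Q \subset D) &&
      [exists k1, exists k2, (Q == [set k1; k2]) && (k1 != k2) && kcross sigma k1 k2]]|.

Definition Z_dimer_signed (R : rcfType) (E : finType) (sigma : {perm dart E})
    (x : E -> R) : R :=
  \sum_(D : {set kedge E} | dimer sigma D)
     (-1) ^+ tcross sigma D * \prod_(k in D) kweight x k.

(* Main.v *)
Require Import Defs.
From HB Require Import structures.
From mathcomp Require Import all_boot all_order all_fingroup all_algebra.
From mathcomp Require Import zify.
Import Order.TTheory GRing.Theory Num.Theory.
Set Implicit Arguments. Unset Strict Implicit. Unset Printing Implicit Defensive.

(* Proof: local Pfaffian-type identity at each vertex
   (sum over perfect matchings of cyclically ordered points of (-1)^crossings = 1),
   proved by induction on the set of unmatched darts. *)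

Module M_A.


Ltac cmpsplit := repeat (match goal with
  | |- context [if ?a <= ?b then _ else _] => case: (leqP a b) => ?; try (exfalso; lia)
  | |- context [?a <= ?b] => case: (leqP a b) => ?; try (exfalso; lia)
  end; try done).

Definition ins (x y t : nat) := ((x < t) && (t < y)) || ((y < t) && (t < x)).

Lemma ins_sym x y t : ins x y t = ins y x t.
Proof. by rewrite /ins orbC. Qed.

Lemma ins_swap x y z w : x != y -> x != z -> x != w -> y != z -> y != w -> z != w ->
  (ins x y z != ins x y w) = (ins z w x != ins z w y).
Proof.
move=> /eqP ? /eqP ? /eqP ? /eqP ? /eqP ? /eqP ?; rewrite /ins; cmpsplit.
Qed.

Section Core.
Variable E : finType.
Variable sigma : {perm dart E}.
Local Notation T := (dart E).
Local Notation sv := (same_vertex sigma).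
Local Notation p := (findex sigma).
Local Notation ord := (fingraph.order sigma).

Lemma sv_refl a : sv a a. Proof. exact: connect0. Qed.
Lemma sv_sym a b : sv a b = sv b a.
Proof. exact: (fconnect_sym (@perm_inj _ sigma)). Qed.
Lemma sv_trans a b c : sv a b -> sv b c -> sv a c.
Proof. exact: connect_trans. Qed.

Lemma order_sv a b : sv a b -> ord b = ord a.
Proof.
move=> ab; rewrite /fingraph.order; apply: eq_card => c.
rewrite !inE; apply/idP/idP => h.
- exact: sv_trans ab h.
- by apply: sv_trans h; rewrite sv_sym.
Qed.

Lemma findex_lt a b : sv a b -> p a b < ord a.
Proof. exact: findex_max. Qed.

Lemma findex_inj a b c : sv a b -> sv a c -> p a b = p a c -> b = c.
Proof.
by move=> ab ac e; rewrite -(iter_findex ab) -(iter_findex ac) e.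
Qed.

Lemma findex_shift x y z : sv x y -> sv x z ->
  p y z = if p x y <= p x z then p x z - p x y else p x z + ord x - p x y.
Proof.
move=> xy xz; have oy := order_sv xy.
have hy := iter_findex xy; have hz := iter_findex xz.
have ly := findex_lt xy; have lz := findex_lt xz.
move: hy hz ly lz; set i := p x y; set j := p x z => hy hz ly lz.
case: leqP => h.
- have -> : z = iter (j - i) sigma y.
    by rewrite -hy -iterD subnK.
  by rewrite findex_iter // oy; lia.
- have -> : z = iter (j + ord x - i) sigma y.
    rewrite -hy -iterD subnK; last lia.
    by rewrite iterD (iter_order (@perm_inj _ sigma)).
  by rewrite findex_iter // oy; lia.
Qed.

Lemma uniq4 (u v w z : T) : uniq [:: u; v; w; z] =
  [&& u != v, u != w, u != z, v != w, v != z & w != z].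
Proof.
rewrite /= !in_cons in_nil !orbF !negb_or.
by case: (u == v); case: (u == w); case: (u == z); case: (v == w);
   case: (v == z); case: (w == z).
Qed.

Definition cr4 r u v w z := ins (p r u) (p r v) (p r w) != ins (p r u) (p r v) (p r z).

Lemma shift_ins r u v t : sv r u -> sv r v -> sv r t ->
  u != v -> u != t -> v != t ->
  (p u t < p u v) = ins (p r u) (p r v) (p r t) (+) (p r v < p r u).
Proof.
move=> ru rv rt uv ut vt.
rewrite (findex_shift ru rv) (findex_shift ru rt).
have := findex_lt ru; have := findex_lt rv; have := findex_lt rt.
have inj := findex_inj.
have d1 : p r u != p r v by apply: contra uv => /eqP/(inj _ _ _ ru rv)->.
have d2 : p r u != p r t by apply: contra ut => /eqP/(inj _ _ _ ru rt)->.
have d3 : p r v != p r t by apply: contra vt => /eqP/(inj _ _ _ rv rt)->.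
move: d1 d2 d3; rewrite /ins.
move: (p r u) (p r v) (p r t) (ord r) => a b c N.
move=> /eqP ? /eqP ? /eqP ? ? ? ?.
cmpsplit.
Qed.

Lemma cross_root r u v w z : sv r u -> sv r v -> sv r w -> sv r z ->
  uniq [:: u; v; w; z] ->
  ((p u w < p u v) != (p u z < p u v)) = cr4 r u v w z.
Proof.
move=> ru rv rw rz; rewrite uniq4 => /and5P[uv uw uz vw /andP[vz wz]].
rewrite (shift_ins ru rv rw) // (shift_ins ru rv rz) // /cr4.
by case: ins; case: ins; case: (_ < _).
Qed.
End Core.

End M_A.
Import M_A.

Module M_C.

Section Cross.
Variable E : finType.
Variable sigma : {perm dart E}.
Local Notation T := (dart E).
Local Notation sv := (same_vertex sigma).
Local Notation p := (findex sigma).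
Local Notation cr4 := (cr4 sigma).

Lemma sv_from r u v : sv r u -> sv r v -> sv u v.
Proof. by move=> ru rv; apply: sv_trans rv; rewrite sv_sym. Qed.

Lemma interlace_cr4 r u v w z : sv r u -> sv r v -> sv r w -> sv r z ->
  interlace sigma u v w z = uniq [:: u; v; w; z] && cr4 r u v w z.
Proof.
move=> ru rv rw rz; rewrite /interlace (sv_from ru rv) (sv_from ru rw) (sv_from ru rz) !andTb.
case un: (uniq [:: u; v; w; z]) => //.
by rewrite (cross_root ru rv rw rz un).
Qed.

Lemma pdist r u v : sv r u -> sv r v -> u != v -> p r u != p r v.
Proof. by move=> ru rv; apply: contra => /eqP/(findex_inj ru rv)->. Qed.

Lemma cr4_symab r u v w z : cr4 r u v w z = cr4 r v u w z.
Proof. by rewrite /M_A.cr4 ins_sym [ins (p r v) _ (p r z)]ins_sym. Qed.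

Lemma cr4_symcd r u v w z : cr4 r u v w z = cr4 r u v z w.
Proof. by rewrite /M_A.cr4 eq_sym. Qed.

Lemma cr4_swap r u v w z : sv r u -> sv r v -> sv r w -> sv r z ->
  uniq [:: u; v; w; z] -> cr4 r u v w z = cr4 r w z u v.
Proof.
move=> ru rv rw rz; rewrite uniq4 => /and5P[uv uw uz vw /andP[vz wz]].
by rewrite /M_A.cr4 ins_swap // pdist.
Qed.

Lemma set2_eq (a b a' b' : T) : [set a; b] = [set a'; b'] -> a != b ->
  (a' = a /\ b' = b) \/ (a' = b /\ b' = a).
Proof.
move=> e ab.
have ha : a \in [set a'; b'] by rewrite -e !inE eqxx.
have hb : b \in [set a'; b'] by rewrite -e !inE eqxx orbT.
have ha' : a' \in [set a; b] by rewrite e !inE eqxx.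
have hb' : b' \in [set a; b] by rewrite e !inE eqxx orbT.
move: ha hb ha' hb'; rewrite !inE.
case/orP=> /eqP ea; case/orP=> /eqP eb; subst; rewrite ?eqxx ?(negbTE ab) //=;
  try by [right|left].
- by move: ab; rewrite eqxx.
- by move: ab; rewrite eqxx.
Qed.

Lemma kcross_same r a b c d : sv r a -> sv r b -> sv r c -> sv r d ->
  uniq [:: a; b; c; d] ->
  kcross sigma (inr [set a; b]) (inr [set c; d]) = cr4 r a b c d.
Proof.
move=> ra rb rc rd un.
have := un; rewrite uniq4 => /and5P[ab ac ad bc /andP[bd cd]].
apply/existsP/idP.
- case=> a'; case/existsP=> b'; case/existsP=> c'; case/existsP=> d'.
  case/and3P=> /eqP e1 /eqP e2 il.
  move: il; have [[-> ->]|[-> ->]] := set2_eq e1 ab;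
  have [[-> ->]|[-> ->]] := set2_eq e2 cd.
  + by rewrite (interlace_cr4 ra rb rc rd) => /andP[].
  + by rewrite (interlace_cr4 ra rb rd rc) cr4_symcd => /andP[].
  + by rewrite (interlace_cr4 rb ra rc rd) cr4_symab => /andP[].
  + by rewrite (interlace_cr4 rb ra rd rc) cr4_symab cr4_symcd => /andP[].
- move=> h; exists a; apply/existsP; exists b; apply/existsP; exists c;
  apply/existsP; exists d; rewrite !eqxx /=.
  by rewrite (interlace_cr4 ra rb rc rd) un.
Qed.

Lemma kcross_diff a b c d : sv a b -> sv c d -> ~~ sv a c ->
  kcross sigma (inr [set a; b]) (inr [set c; d]) = false.
Proof.
move=> ab cd nac; apply/existsP => -[a' /existsP[b' /existsP[c' /existsP[d' H]]]].
case/and3P: H => /eqP e1 /eqP e2 /and5P[_ h _ _ _].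
have ha' : a' \in [set a; b] by rewrite e1 !inE eqxx.
have hc' : c' \in [set c; d] by rewrite e2 !inE eqxx.
move: ha' hc'; rewrite !inE => /orP[]/eqP ea /orP[]/eqP ec; subst; move: nac.
- by rewrite h.
- by rewrite (sv_trans h) // sv_sym.
- by rewrite (sv_trans ab) //.
- by rewrite (sv_trans ab) // (sv_trans h) // sv_sym.
Qed.

End Cross.

End M_C.
Import M_C.

Module M_D.

Section Generic.
Variable T : finType.

Definition pc (r : rel T) (D : {set T}) :=
  #|[set Q : {set T} | (Q \subset D) &&
      [exists k1, exists k2, (Q == [set k1; k2]) && (k1 != k2) && r k1 k2]]|.

Lemma pc_add (r : rel T) (D : {set T}) k : k \notin D ->
  pc r (k |: D) = pc r D + #|[set k2 in D | r k k2 || r k2 k]|.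
Proof.
move=> kD; rewrite /pc.
set A := [set Q : {set T} | _ && _ ].
set A' := [set Q : {set T} | _ && _ ].
set C := [set k2 in D | _].
have inj : {in C &, injective (fun k2 => [set k; k2])}.
  move=> k2 k3; rewrite !inE => /andP[k2D _] /andP[k3D _] e.
  have : k2 \in [set k; k3] by rewrite -e !inE eqxx orbT.
  rewrite !inE => /orP[/eqP ek|/eqP //]; by move: kD; rewrite -ek k2D.
have eA : A = A' :|: [set [set k; k2] | k2 in C].
  apply/setP => Q; rewrite !inE; apply/idP/idP.
  - case/andP=> sQ /existsP[k1 /existsP[k2 /andP[/andP[/eqP eQ n12] r12]]].
    case kQ: (k \in Q).
    + apply/orP; right; apply/imsetP.
      move: kQ; rewrite eQ !inE => /orP[/eqP ek1|/eqP ek2].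
      * subst k1; exists k2 => //.
        rewrite !inE r12 /=.
        have : k2 \in k |: D by apply: (subsetP sQ); rewrite eQ !inE eqxx orbT.
        rewrite !inE => /orP[/eqP e|->//]; by move: n12; rewrite e eqxx.
      * subst k2; exists k1; last by rewrite setUC.
        rewrite !inE r12 orbT andbT.
        have : k1 \in k |: D by apply: (subsetP sQ); rewrite eQ !inE eqxx.
        rewrite !inE => /orP[/eqP e|->//]; by move: n12; rewrite e eqxx.
    + apply/orP; left; apply/andP; split.
      * apply/subsetP => y yQ; have := subsetP sQ y yQ.
        rewrite !inE => /orP[/eqP e|->//]; by move: kQ; rewrite -e yQ.
      * by apply/existsP; exists k1; apply/existsP; exists k2; rewrite eQ eqxx n12 r12.
  - case/orP.
    + case/andP=> sQ ->; rewrite andbT; apply: (subset_trans sQ).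
      by apply/subsetP => y yD; rewrite !inE yD orbT.
    + case/imsetP=> k2; rewrite !inE => /andP[k2D rk] ->.
      have nk : k != k2 by apply: contraNneq kD => ->.
      apply/andP; split.
      * by apply/subsetP => y; rewrite !inE => /orP[->|/eqP->] //; rewrite k2D orbT.
      * case/orP: rk => rk.
        - by apply/existsP; exists k; apply/existsP; exists k2; rewrite eqxx nk rk.
        - apply/existsP; exists k2; apply/existsP; exists k.
          by rewrite setUC eqxx eq_sym nk rk.
rewrite eA cardsU (card_in_imset inj).
suff -> : A' :&: [set [set k; k2] | k2 in C] = set0 by rewrite cards0 subn0.
apply/setP => Q; rewrite !inE; apply/andP => -[/andP[sQ _] /imsetP[k2 _ eQ]].
by move: kD; rewrite (subsetP sQ) // eQ !inE eqxx.
Qed.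

Local Open Scope ring_scope.
Lemma rank_sum (R : pzRingType) (Y : {set T}) (q : T -> nat) :
  {in Y &, injective q} ->
  \sum_(b in Y) (-1) ^+ #|[set c in Y | (q c < q b)%N]| = (odd #|Y|)%:R :> R.
Proof.
move: {2}#|Y| (leqnn #|Y|) => m; elim: m Y => [|m IH] Y.
  by rewrite leqn0 cards_eq0 => /eqP -> _; rewrite big_set0 cards0.
move=> hY inj; case: (set_0Vmem Y) => [->|[b0 b0Y]].
  by rewrite big_set0 cards0.
have [mx mxY mxmax] := arg_maxnP q b0Y.
set Y' := Y :\ mx.
have eY : Y = mx |: Y' by rewrite setD1K.
have mY' : mx \notin Y' by rewrite !inE eqxx.
have inj' : {in Y' &, injective q}.
  by move=> u v uY vY; apply: inj; [move: uY|move: vY]; rewrite !inE => /andP[].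
rewrite {1}eY big_setU1 //=.
have e1 : [set c in Y | (q c < q mx)%N] = Y'.
  apply/setP => c; rewrite !inE; apply/idP/idP.
  - case/andP=> cY lt; rewrite cY andbT; apply: contraTneq lt => ->; by rewrite ltnn.
  - case/andP=> nc cY; have hc : (q c <= q mx)%N := mxmax c cY.
    rewrite cY /= ltn_neqAle hc andbT.
    by apply: contra nc => /eqP/inj -> //.
rewrite e1 (eq_bigr (fun b => (-1) ^+ #|[set c in Y' | (q c < q b)%N]|)).
  rewrite IH //; last by move: hY; rewrite eY cardsU1 mY'.
  rewrite eY cardsU1 mY' /= -signr_odd; by case: (odd #|Y'|); rewrite /= ?expr1 ?expr0 ?addNr ?addr0.
move=> b bY'; congr (_ ^+ _); apply: eq_card => c; rewrite !inE.
have bY : b \in Y by move: bY'; rewrite !inE => /andP[].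
case: (eqVneq c mx) => [->|//].
have hb : (q b <= q mx)%N := mxmax b bY.
by rewrite /= ltnNge hb andbF.
Qed.

Lemma sign_card (R : comPzRingType) (A : {set T}) (P : pred T) :
  (-1) ^+ #|[set i in A | P i]| = \prod_(i in A) (-1) ^+ (P i) :> R.
Proof.
rewrite [RHS](bigID P) /= (eq_bigr (fun _ => -1)); last by move=> i /andP[_ ->].
rewrite [X in _ * X]big1; last by move=> i /andP[_ /negbTE ->].
by rewrite mulr1 prodr_const; congr (_ ^+ _); apply: eq_card => i; rewrite !inE.
Qed.

Lemma sign_sum (R : comPzRingType) (A : {pred T}) (g : T -> nat) :
  (-1) ^+ (\sum_(i in A) g i) = \prod_(i in A) (-1) ^+ (g i) :> R.
Proof. by rewrite (big_morph _ (exprD (-1)) (expr0 _)). Qed.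

End Generic.

End M_D.
Import M_D.

Module M_D2.


Section Generic2.
Variable T : finType.
Lemma sum_mem (T0 : finType) (A : {set T0}) (P : pred T0) :
  (\sum_(x in A) (P x : nat)) = #|[set x in A | P x]|.
Proof.
rewrite (bigID P) /= [X in (_ + X)]big1; last by move=> i /andP[_ /negbTE ->].
rewrite addn0 (eq_bigr (fun _ => 1)); last by move=> i /andP[_ ->].
by rewrite sum1dep_card.
Qed.

Lemma card_inter (A B : {set T}) : #|A :&: B| = (\sum_(x in B) (x \in A : nat)).
Proof. by rewrite sum_mem; apply: eq_card => x; rewrite !inE andbC. Qed.

Lemma exch_cnt (F : {set {set T}}) (B : {set T}) :
  (\sum_(U in F) #|U :&: B|) = (\sum_(c in B) #|[set U in F | c \in U]|).
Proof.
rewrite (eq_bigr (fun U : {set T} => \sum_(c in B) (c \in U : nat))); last by move=> U _; rewrite card_inter.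
rewrite exchange_big /=; apply: eq_bigr => c _.
by rewrite -(sum_mem F (fun U => c \in U)).
Qed.
End Generic2.

End M_D2.
Import M_D2.

Module M_F.

Section Good.
Variable E : finType.
Variable sigma : {perm dart E}.
Local Notation T := (dart E).
Local Notation sv := (same_vertex sigma).
Local Notation p := (findex sigma).

Definition validS (U : {set T}) :=
  (#|U| == 2) && [forall a in U, forall b in U, sv a b].
Definition good (X : {set T}) (F : {set {set T}}) :=
  [forall U in F, validS U] && [forall d, #|[set U in F | d \in U]| == (d \in X)].
Definition kof (F : {set {set T}}) : {set kedge E} :=
  [set k : kedge E | if k is inr S0 then S0 \in F else false].
Definition crF F := tcross sigma (kof F).
Definition evenX (X : {set T}) := [forall d, ~~ odd #|[set d' | sv d d' & d' \in X]|].

Lemma good_valid X F U : good X F -> U \in F -> validS U.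
Proof. by case/andP=> /forall_inP h _; apply: h. Qed.

Lemma good_cnt X F d : good X F -> #|[set U in F | d \in U]| = (d \in X).
Proof. by case/andP=> _ /forallP /(_ d) /eqP. Qed.

Lemma good_uniq X F S1 S2 d : good X F -> S1 \in F -> S2 \in F ->
  d \in S1 -> d \in S2 -> S1 = S2.
Proof.
move=> g h1 h2 d1 d2; apply/eqP; apply/negPn/negP => ne.
have := good_cnt d g.
have : [set S1; S2] \subset [set U in F | d \in U].
  by apply/subsetP => U; rewrite !inE => /orP[]/eqP->; rewrite ?h1 ?h2 ?d1 ?d2.
move/subset_leq_card; rewrite cards2 ne => h e; move: h; rewrite e.
by case: (d \in X).
Qed.

Lemma good_sub X F U d : good X F -> U \in F -> d \in U -> d \in X.
Proof.
move=> g hS dS; have := good_cnt d g.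
case: (d \in X) => // /eqP; rewrite cards_eq0 => /eqP e.
have : U \in [set U in F | d \in U] by rewrite !inE hS dS.
by rewrite e inE.

Qed.

Lemma good_ex X F d : good X F -> d \in X -> exists2 U, U \in F & d \in U.
Proof.
move=> g dX; have := good_cnt d g; rewrite dX => /eqP/cards1P[U e].
have : U \in [set U in F | d \in U] by rewrite e set11.
by rewrite inE => /andP[h1 h2]; exists U.
Qed.

Lemma validP U : validS U -> exists c d, [/\ c != d, sv c d & U = [set c; d]].
Proof.
case/andP=> /cards2P[c [d [cd eS]]] /forall_inP h.
exists c, d; split => //; have := h c; rewrite eS !inE eqxx => /(_ isT) /forall_inP.
by apply; rewrite !inE eqxx orbT.
Qed.

Lemma valid2 a b : a != b -> sv a b -> validS [set a; b].
Proof.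
move=> ab sab; rewrite /validS cards2 ab /=.
apply/forall_inP => x; rewrite !inE => /orP[]/eqP-> ; apply/forall_inP => y;
  rewrite !inE => /orP[]/eqP->; by rewrite ?sv_refl ?sab // sv_sym.
Qed.

Lemma cnt_add (F : {set {set T}}) U d : U \notin F ->
  #|[set U' in U |: F | d \in U']| = (d \in U) + #|[set U' in F | d \in U']|.
Proof.
move=> SF; case dS: (d \in U).
- have -> : [set U' in U |: F | d \in U'] = U |: [set U' in F | d \in U'].
    apply/setP => U'; rewrite !inE; case: (eqVneq U' U) => [->|] //=; by rewrite dS.
  by rewrite cardsU1 !inE (negbTE SF).
- rewrite add0n; apply: eq_card => U'; rewrite !inE; case: (eqVneq U' U) => [->|] //=.
  by rewrite dS andbF; case: (U \in F).
Qed.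

Lemma good_add (X : {set T}) (F : {set {set T}}) a b : a != b -> a \in X -> b \in X -> sv a b ->
  good X ([set a; b] |: F) && ([set a; b] \notin F) = good (X :\ a :\ b) F.
Proof.
move=> ab aX bX sab; apply/idP/idP.
- case/andP=> g nF; apply/andP; split.
  + apply/forall_inP => U SF; apply: (good_valid g); by rewrite !inE SF orbT.
  + apply/forallP => d; have := good_cnt d g; rewrite cnt_add // !inE.
    case: (eqVneq d a) => [->|da] /=.
      by rewrite aX ?andbF; lia.
    case: (eqVneq d b) => [->|db] /=.
      by rewrite bX ?andbF; lia.
    by rewrite add0n => ->.
- move=> g.
  have nF : [set a; b] \notin F.
    apply/negP => abF; have := good_sub g abF (setU11 _ _).
    by rewrite !inE eqxx andbF.
  rewrite nF andbT; apply/andP; split.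
  + apply/forall_inP => U; rewrite !inE => /orP[/eqP->|SF]; first exact: valid2.
    exact: (good_valid g).
  + apply/forallP => d; rewrite cnt_add // (good_cnt d g) !inE.
    case: (eqVneq d a) => [->|da] /=; first by rewrite aX ?andbF.
    case: (eqVneq d b) => [->|db] /=; first by rewrite bX ?andbF.
    by rewrite add0n.
Qed.

End Good.

End M_F.
Import M_F.

Module M_G.

Section Core2.
Variable E : finType.
Variable sigma : {perm dart E}.
Local Notation T := (dart E).
Local Notation sv := (same_vertex sigma).
Local Notation p := (findex sigma).

Definition crossS (U U' : {set T}) :=
  kcross sigma (inr U) (inr U') || kcross sigma (inr U') (inr U).

Lemma inr_injT : injective (@inr E {set T}).
Proof. by move=> x y []. Qed.

Lemma kof_add (F : {set {set T}}) U : kof (U |: F) = inr U |: kof F.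
Proof. by apply/setP => -[e|V]; rewrite !inE. Qed.

Lemma crF_add (F : {set {set T}}) U : U \notin F ->
  crF sigma (U |: F) = crF sigma F + #|[set U' in F | crossS U U']|.
Proof.
move=> UF; rewrite /crF kof_add.
have e : forall D, tcross sigma D = pc (fun k1 k2 => kcross sigma k1 k2) D by [].
rewrite !e pc_add; last by rewrite inE.
congr (_ + _).
have -> : [set k2 in kof F | kcross sigma (inr U) k2 || kcross sigma k2 (inr U)]
  = inr @: [set U' in F | crossS U U'].
  apply/setP => -[e1|V]; rewrite !inE /=.
  - by apply/esym/imsetP => -[V _].
  - by rewrite (mem_imset _ _ inr_injT) inE.
by rewrite (card_imset _ inr_injT).
Qed.

Lemma card2I (c d : T) (B : {set T}) : c != d ->
  #|[set c; d] :&: B| = (c \in B) + (d \in B).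
Proof.
move=> cd; rewrite setIC card_inter big_setU1 ?big_set1 //.
by rewrite inE.
Qed.

Lemma sign_cross (R : comPzRingType) (X : {set T}) (F : {set {set T}}) a b :
  a != b -> a \in X -> b \in X -> sv a b -> good sigma (X :\ a :\ b) F ->
  ((-1) ^+ #|[set U in F | crossS [set a; b] U]|)%R =
  ((-1) ^+ #|[set c in [set c in X | sv a c & c != a] | (p a c < p a b)%N]|)%R :> R.
Proof.
move=> ab aX bX sab g.
set Y := [set c in X | sv a c & c != a].
set B := [set c in Y | p a c < p a b].
have BX : forall c, c \in B -> c \in X :\ a :\ b.
  move=> c; rewrite !inE => /andP[/and3P[cX _ ca] lt]; rewrite cX ca andbT.
  rewrite andbT; by apply: contraTneq lt => ->; rewrite ltnn.
have cB : #|B| = \sum_(U in F) #|U :&: B|.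
  rewrite exch_cnt (eq_bigr (fun _ => 1)) ?sum1_card // => c cB.
  by rewrite (good_cnt c g) BX.
rewrite cB sign_sum sign_card; apply: eq_bigr => U UF.
have [c [d [cd scd eU]]] := validP (good_valid g UF).
have cX' : c \in X :\ a :\ b by apply: (good_sub g UF); rewrite eU !inE eqxx.
have dX' : d \in X :\ a :\ b by apply: (good_sub g UF); rewrite eU !inE eqxx orbT.
rewrite eU card2I //.
move: (cX') (dX'); rewrite !inE => /and3P[cb ca cX] /and3P[db da dX].
have [sac|nsac] := boolP (sv a c).
- have sad : sv a d := sv_trans sac scd.
  have un : uniq [:: a; b; c; d] by rewrite uniq4 ab eq_sym ca eq_sym da eq_sym cb eq_sym db cd.
  have un' : uniq [:: c; d; a; b].
    by rewrite uniq4 cd ca cb da db ab.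
  rewrite /crossS (kcross_same (sv_refl sigma a) sab sac sad un).
  rewrite (kcross_same sac sad (sv_refl sigma a) sab un').
  rewrite (cr4_swap sac sad (sv_refl sigma a) sab un') orbb.
  rewrite /M_A.cr4 findex0 /ins !ltn0 !andbF !orbF.
  have pc0 : 0 < p a c by rewrite lt0n findex_eq0 eq_sym.
  have pd0 : 0 < p a d by rewrite lt0n findex_eq0 eq_sym.
  rewrite pc0 pd0 cX dX sad ca da /=.
  rewrite -[in RHS]signr_odd.
  by case: (p a c < p a b); case: (p a d < p a b).
- have nsad : ~~ sv a d by apply: contra nsac => sad; apply: sv_trans sad _; rewrite sv_sym.
  have nsca : ~~ sv c a by rewrite sv_sym.
  rewrite /crossS (kcross_diff sab scd nsac) (kcross_diff scd sab nsca) /=.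
  by rewrite (negbTE nsad) !andbF.
Qed.

End Core2.

End M_G.
Import M_G.

Module M_H.

Section Core3.
Variable E : finType.
Variable sigma : {perm dart E}.
Local Notation T := (dart E).
Local Notation sv := (same_vertex sigma).
Local Notation p := (findex sigma).

Lemma good0 (F : {set {set T}}) : good sigma set0 F = (F == set0).
Proof.
apply/idP/eqP.
- move=> g; apply/setP => U; rewrite inE; apply/negP => UF.
  have [c [d [_ _ eU]]] := validP (good_valid g UF).
  have cU : c \in U by rewrite eU !inE eqxx.
  by have := good_sub g UF cU; rewrite inE.
- move=> ->; apply/andP; split; first by apply/forall_inP => U; rewrite inE.
  apply/forallP => d; rewrite inE.
  by rewrite (_ : [set U : {set T} in set0 | d \in U] = set0) ?cards0 //; apply/setP => U; rewrite !inE.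
Qed.

Lemma crF0 : crF sigma set0 = 0.
Proof.
rewrite /crF /tcross; apply/eqP; rewrite cards_eq0; apply/eqP/setP => Q; rewrite !inE.
apply/negP => /andP[sQ /existsP[k1 /existsP[k2 /andP[/andP[/eqP eQ _] _]]]].
have : k1 \in Q by rewrite eQ !inE eqxx.
move/(subsetP sQ); rewrite inE; by case: k1 {eQ} => //= V; rewrite inE.
Qed.

Lemma evenX0 : evenX sigma set0.
Proof.
apply/forallP => d.
by rewrite (_ : [set d' | sv d d' & d' \in set0] = set0) ?cards0 //; apply/setP => x; rewrite !inE andbF.
Qed.

Lemma core0 (R : comPzRingType) :
  (\sum_(F | good sigma set0 F) (-1) ^+ crF sigma F)%R = ((evenX sigma set0)%:R)%R :> R.
Proof.
rewrite (big_pred1 set0); last by move=> F; rewrite good0.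
by rewrite crF0 evenX0 expr0.
Qed.

Lemma evenX_rm (X : {set T}) a b : a \in X -> b \in X -> a != b -> sv a b ->
  evenX sigma (X :\ a :\ b) = evenX sigma X.
Proof.
move=> aX bX ab sab; apply: eq_forallb => d.
set A := [set d' | sv d d' & d' \in X].
case: (boolP (sv d a)) => sda.
- have sdb : sv d b := sv_trans sda sab.
  rewrite [in RHS](cardsD1 a A) [in RHS](cardsD1 b (A :\ a)).
  rewrite !inE sda sdb aX bX eq_sym ab /=.
rewrite ?add0n ?negbK.   congr (~~ odd _); apply: eq_card => x; rewrite !inE.
  by case: (sv d x); case: (x == a); case: (x == b); case: (x \in X).
- congr (~~ odd _); apply: eq_card => x; rewrite !inE.
  case: (boolP (sv d x)) => sdx //=.
  have xa : x != a by apply: contraNneq sda => <-.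
  have xb : x != b.
    by apply: contraNneq sda => exb; apply: (sv_trans sdx); rewrite exb sv_sym.
  by rewrite xa xb.
Qed.

Lemma core (R : comPzRingType) (X : {set T}) :
  (\sum_(F | good sigma X F) (-1) ^+ crF sigma F)%R = ((evenX sigma X)%:R)%R :> R.
Proof.
move: {2}#|X| (leqnn #|X|) => m; elim: m X => [|m IH] X hX.
  by move: hX; rewrite leqn0 cards_eq0 => /eqP ->; exact: core0.
case: (set_0Vmem X) => [->|[a aX]]; first exact: core0.
set Y := [set b in X | sv a b & b != a].
pose pf (F : {set {set T}}) := odflt a [pick b in Y | [set a; b] \in F].
have partner : forall F, good sigma X F -> exists2 b, b \in Y & [set a; b] \in F.
  move=> F g; have [U UF aU] := good_ex g aX.
  have [c [d [cd scd eU]]] := validP (good_valid g UF).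
  have cX : c \in X by apply: (good_sub g UF); rewrite eU !inE eqxx.
  have dX : d \in X by apply: (good_sub g UF); rewrite eU !inE eqxx orbT.
  move: aU; rewrite eU !inE => /orP[]/eqP eac.
  + exists d; last by rewrite eac -eU.
    by rewrite !inE dX eac scd eq_sym cd.
  + exists c; last by rewrite eac setUC -eU.
    by rewrite !inE cX eac sv_sym scd cd.
have uniqp : forall F b b', good sigma X F -> b \in Y -> [set a; b] \in F ->
    [set a; b'] \in F -> b = b'.
  move=> F b b' g bY h1 h2.
  have e := good_uniq g h1 h2 (set21 _ _) (set21 _ _).
  have : b \in [set a; b'] by rewrite -e set22.
  rewrite !inE => /orP[/eqP eba|/eqP //].
  by move: bY; rewrite eba /Y !inE eqxx /= !andbF.
rewrite (partition_big pf (fun b => b \in Y)); last first.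
  move=> F g; rewrite /pf; case: pickP => [b /andP[] //|none].
  have [b bY bF] := partner F g; by move: (none b); rewrite bY bF.
have step : forall b, b \in Y ->
  (\sum_(F | good sigma X F && (pf F == b)) (-1) ^+ crF sigma F)%R =
  ((-1) ^+ #|[set c in Y | (p a c < p a b)%N]| * (evenX sigma X)%:R)%R :> R.
  move=> b bY.
  have := bY; rewrite /Y !inE => /and3P[bX sab ba]; have ab : a != b by rewrite eq_sym.
  rewrite (eq_bigl (fun F => good sigma X F && ([set a; b] \in F))); last first.
    move=> F; apply/andP/andP => -[g h]; split => //.
    - move: h; rewrite /pf; case: pickP => [b' /andP[b'Y b'F] /= /eqP <- //|none /= /eqP eab].
      by move: ba; rewrite -eab eqxx.
    - rewrite /pf; case: pickP => [b' /andP[b'Y b'F]|none] /=.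
      + by rewrite (uniqp F b' b g b'Y b'F h).
      + by move: (none b); rewrite bY h.
  rewrite (reindex_onto (fun F' => [set a; b] |: F') (fun F => F :\ [set a; b])); last first.
    by move=> F /andP[_ h]; rewrite setD1K.
  rewrite (eq_bigl (fun F' => good sigma (X :\ a :\ b) F')); last first.
    move=> F'; rewrite setU11 andbT -(good_add F' ab aX bX sab); congr (_ && _).
    apply/eqP/idP => [e|nF]; last by rewrite setU1K.
    by rewrite -e !inE eqxx.
  rewrite (eq_bigr (fun F' => ((-1) ^+ crF sigma F' *
     (-1) ^+ #|[set c in Y | (p a c < p a b)%N]|)%R)); last first.
    move=> F' g.
    have nF : [set a; b] \notin F'.
      by move: g; rewrite -(good_add F' ab aX bX sab) => /andP[].
    by rewrite crF_add // exprD (sign_cross _ ab aX bX sab g).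
  rewrite -big_distrl /= IH; last first.
    move: hX; rewrite (cardsD1 a X) (cardsD1 b (X :\ a)) aX !inE bX ba /=; lia.
  by rewrite (evenX_rm aX bX ab sab) mulrC.
rewrite (eq_bigr _ step) -big_distrl /= rank_sum; last first.
  move=> u v; rewrite !inE => /and3P[_ su _] /and3P[_ sv _]; exact: findex_inj.
case: (boolP (evenX sigma X)) => ev; last by rewrite mulr0.
suff -> : odd #|Y| by rewrite mulr1.
move/forallP: ev => /(_ a).
rewrite (_ : [set d' | sv a d' & d' \in X] = a |: Y); last first.
  apply/setP => x; rewrite !inE; case: (eqVneq x a) => [->|xa] /=.
    by rewrite sv_refl aX.
  by rewrite andbT andbC.
by rewrite cardsU1 /Y !inE eqxx /= !andbF /= negbK add0n => ->.
Qed.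

End Core3.

End M_H.
Import M_H.

Module M_K.

Section Glob.
Variable E : finType.
Variable sigma : {perm dart E}.
Local Notation T := (dart E).
Local Notation sv := (same_vertex sigma).

Definition hD (L : {set E}) (F : {set {set T}}) : {set kedge E} :=
  [set k : kedge E | match k with inl e => e \in L | inr U => U \in F end].
Definition Xof (L : {set E}) : {set T} := [set d : T | d.1 \notin L].
Definition Lof (D : {set kedge E}) : {set E} := [set e | inl e \in D].
Definition Fof (D : {set kedge E}) : {set {set T}} := [set U | inr U \in D].

Lemma cnt_hD L F (d : T) :
  #|[set k in hD L F | d \in kends k]| = (d.1 \in L) + #|[set U in F | d \in U]|.
Proof.
rewrite -(eq_card (A := [set k in [set: kedge E] | (k \in hD L F) && (d \in kends k)])); last first.
  by move=> k; rewrite !inE.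
rewrite -sum_mem big_sumType /=; congr (_ + _).
- rewrite (eq_bigr (fun e => (e == d.1) && (e \in L) : nat)); last first.
    move=> e _; rewrite !inE; case: d => d1 d2 /=.
    case: (eqVneq e d1) => [->|ne] /=; first by case: d2; rewrite ?eqxx ?orbT ?andbT.
    by rewrite !xpair_eqE [d1 == e]eq_sym (negbTE ne) /= andbF.
  rewrite (bigD1 d.1) ?in_setT //= eqxx big1 ?addn0 // => e /andP[_ /negbTE ->].
  by [].
- rewrite (eq_bigl (fun U => U \in [set: {set T}])); last by move=> U; rewrite !in_setT.
  rewrite (eq_bigr (fun U => ((U \in F) && (d \in U) : nat))); last by move=> U _; rewrite inE.
  by rewrite sum_mem; apply: eq_card => U; rewrite !inE.
Qed.

Lemma dimer_hD L F : dimer sigma (hD L F) = good sigma (Xof L) F.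
Proof.
rewrite /dimer /good; congr (_ && _).
- apply/forall_inP/forall_inP => h.
  + by move=> U UF; apply: (h (inr U)); rewrite inE.
  + by move=> [e|U] //; rewrite inE => UF; apply: h.
- apply: eq_forallb => d; rewrite cnt_hD inE.
  by case: (d.1 \in L) => /=; case: #|_| => [|[|n]].
Qed.

Lemma kcross_inr (k1 k2 : kedge E) : kcross sigma k1 k2 ->
  exists U1 U2, k1 = inr U1 /\ k2 = inr U2.
Proof. by case: k1 => // U1; case: k2 => // U2 _; exists U1, U2. Qed.

Lemma tcross_hD L F : tcross sigma (hD L F) = crF sigma F.
Proof.
rewrite /crF /tcross; apply: eq_card => Q; rewrite !inE.
apply/andP/andP => -[sQ ex]; split => //; case/existsP: (ex) => k1 /existsP[k2 /andP[/andP[/eqP eQ _] kc]];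
  have [U1 [U2 [e1 e2]]] := kcross_inr kc; subst; move: sQ;
  by rewrite !subUset !sub1set !inE.
Qed.

Lemma Lof_hD L F : Lof (hD L F) = L.
Proof. by apply/setP => e; rewrite !inE. Qed.

Lemma Fof_hD L F : Fof (hD L F) = F.
Proof. by apply/setP => U; rewrite !inE. Qed.

Lemma hD_LF D : hD (Lof D) (Fof D) = D.
Proof. by apply/setP => -[e|U]; rewrite !inE. Qed.

Lemma evenX_Xof L : evenX sigma (Xof L) = even_subgraph sigma (~: L).
Proof.
apply: eq_forallb => d; congr (~~ odd _); apply: eq_card => d'.
by rewrite !inE.
Qed.

Lemma sqrt_prod (R : rcfType) (I : finType) (A : {pred I}) (f : I -> R) :
  (forall i, (0 <= f i)%R) ->
  Num.sqrt (\prod_(i in A) f i)%R = (\prod_(i in A) Num.sqrt (f i))%R.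
Proof.
move=> h.
have [] : Num.sqrt (\prod_(i in A) f i)%R = (\prod_(i in A) Num.sqrt (f i))%R /\
  (0 <= \prod_(i in A) f i)%R; last by [].
apply: (big_ind2 (fun a b => Num.sqrt b = a /\ (0 <= b)%R)).
- by rewrite sqrtr1 ler01.
- move=> x1 x2 y1 y2 [<- hx] [<- hy]; split; first by rewrite sqrtrM.
  exact: mulr_ge0.
- by move=> i _; split; last exact: h.
Qed.

Lemma prod_partition (R : comPzRingType) (X : {set T}) (F : {set {set T}}) (g : T -> R) :
  good sigma X F -> (\prod_(U in F) \prod_(d in U) g d)%R = (\prod_(d in X) g d)%R.
Proof.
move=> gd.
rewrite (eq_bigr (fun U : {set T} => \prod_(d : T) (if d \in U then g d else 1))%R); last by move=> U _; rewrite big_mkcond.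
rewrite exchange_big /= [RHS]big_mkcond; apply: eq_bigr => d _.
have -> : (\prod_(U in F) (if d \in U then g d else 1) = \prod_(U in [set U in F | d \in U]) g d)%R.
  rewrite [RHS]big_mkcond [LHS]big_mkcond; apply: eq_bigr => U _; rewrite !inE.
  by case: (U \in F); case: (d \in U).
by rewrite prodr_const (good_cnt d gd); case: (d \in X); rewrite ?expr1 ?expr0.
Qed.

Lemma weight_hD (R : rcfType) (x : E -> R) L F : (forall e, 0 <= x e)%R ->
  good sigma (Xof L) F ->
  (\prod_(k in hD L F) kweight x k)%R = (\prod_(e in ~: L) x e)%R.
Proof.
move=> x0 g.
rewrite big_mkcond big_sumType /= big1 ?mul1r; last by move=> e _; case: ifP.
rewrite -big_mkcond /= (eq_bigl (fun U => U \in F)); last by move=> U; rewrite inE.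
rewrite (eq_bigr (fun U : {set T} => \prod_(d in U) Num.sqrt (x d.1))%R); last first.
  by move=> U _; rewrite /= sqrt_prod.
rewrite (prod_partition _ g) big_mkcond.
have -> : forall h : T -> R, (\prod_(d : T) h d = \prod_(e : E) \prod_(b : bool) h (e, b))%R.
  by move=> h; rewrite pair_big /=; apply: eq_bigr => -[e b] _.
rewrite [RHS]big_mkcond; apply: eq_bigr => e _; rewrite big_bool !inE /=.
case: (e \in L) => /=; first by rewrite mulr1.
by rewrite -expr2 sqr_sqrtr.
Qed.

End Glob.

End M_K.
Import M_K.

Local Open Scope ring_scope.

Theorem lemma2p1 (R : rcfType) (E : finType) (sigma : {perm dart E})
    (x : E -> R) :
  rs_connected sigma -> rs_planar sigma -> (forall e, 0 <= x e) ->
  Z_Ising sigma x = Z_dimer_signed sigma x.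
Proof.
move=> _ _ x0.
rewrite /Z_dimer_signed (partition_big (@Lof E) xpredT) //=.
have eL : forall L : {set E},
  \sum_(D | dimer sigma D && (Lof D == L)) (-1) ^+ tcross sigma D * \prod_(k in D) kweight x k
  = (even_subgraph sigma (~: L))%:R * \prod_(e in ~: L) x e.
  move=> L.
  rewrite (reindex_onto (hD L) (@Fof E)); last first.
    by move=> D /andP[_ /eqP <-]; rewrite hD_LF.
  rewrite (eq_bigl (fun F => good sigma (Xof L) F)); last first.
    by move=> F; rewrite dimer_hD Lof_hD Fof_hD !eqxx !andbT.
  rewrite (eq_bigr (fun F => (-1) ^+ crF sigma F * \prod_(e in ~: L) x e)); last first.
    by move=> F g; rewrite tcross_hD (weight_hD x0 g).
  by rewrite -big_distrl /= core evenX_Xof.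
rewrite (eq_bigr _ (fun L _ => eL L)) /Z_Ising big_mkcond /=.
rewrite (reindex_inj (@setC_inj E)) /=; apply: eq_bigr => L _.
by case: (even_subgraph sigma (~: L)); rewrite ?mul1r ?mul0r.
Qed.
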